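(* Consider an imprecise hidden Markov model as in the context with fixed output sequence $o_{1:n}$, under the positivity assumption. Let $s\in\{2,\dots,n\}$, $\hat{x}_{s-1}\in\mathcal{X}_{s-1}$ and $x^*_{s:n}\in\mathcal{X}_{s:n}$. If $\alpha_{s-1}(\hat{x}_{s-1}\oplus x^*_{s:n})=\alpha^{\max}_{s-1}(\hat{x}_{s-1})$, then $x^*_{s:n}\in\mathrm{opt}(\mathcal{X}_{s:n}\mid\hat{x}_{s-1},o_{s:n})$.
   Context: Setting: $n\ge1$; $\mathcal{X}_0=\{x_0\}$ a singleton; finite non-empty $\mathcal{X}_1,\dots,\mathcal{X}_n$, $\mathcal{O}_1,\dots,\mathcal{O}_n$; $\mathcal{X}_{k:\ell}=\times_{r=k}^\ell\mathcal{X}_r$, similarly $\mathcal{O}_{k:\ell}$; $\oplus$ is concatenation. Coherent lower previsions $\underline{P}$: $\underline{P}(f)\ge\min f$, $\underline{P}(\lambda f)=\lambda\underline{P}(f)$ ($\lambda\ge0$), $\underline{P}(f+g)\ge\underline{P}(f)+\underline{P}(g)$; $\overline{P}(f)=-\underline{P}(-f)$; $\underline{P}(A)=\underline{P}(\mathbb{I}_A)$. Local models: coherent $\underline{Q}_k(\cdot\mid z_{k-1})$ on gambles on $\mathcal{X}_k$ and $\underline{S}_k(\cdot\mid z_k)$ on gambles on $\mathcal{O}_k$. Joint models: $\underline{E}_n(\cdot\mid z_n):=\underline{S}_n(\cdot\mid z_n)$; for $k<n$, $\underline{E}_k(\cdot\mid X_k)$ is the conditionally independent natural extension of $\underline{S}_k(\cdot\mid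 X_k)$ and $\underline{P}_{k+1}(\cdot\mid X_k)$ (pointwise smallest separately coherent conditional lower prevision on gambles on $\mathcal{X}_{k+1:n}\times\mathcal{O}_{k:n}$ jointly coherent with and extending both, with $O_k$ and $(X_{k+1:n},O_{k+1:n})$ mutually epistemically irrelevant given $X_k$); $\underline{P}_k(f\mid z_{k-1}):=\underline{Q}_k\big(\sum_{z_k}\mathbb{I}_{\{z_k\}}\underline{E}_k(f(z_k,\cdot)\mid z_k)\mid z_{k-1}\big)$. Positivity: $\overline{Q}_k(\{z_k\}\mid z_{k-1})>0$, $\overline{S}_k(\{o_k\}\mid z_k)>0$ always. $\mathrm{opt}(\mathcal{X}_{k:n}\mid z_{k-1},o_{k:n})$: the $\hat{x}_{k:n}$ with $\underline{P}_k(\mathbb{I}_{o_{k:n}}[\mathbb{I}_{x_{k:n}}-\mathbb{I}_{\hat{x}_{k:n}}]\mid z_{k-1})\le0$ for all $x_{k:n}\in\mathcal{X}_{k:n}$. $\alpha_k(z_{k:n}):=\overline{S}_k(\{o_k\}\mid z_k)\prod_{i=k+1}^n\overline{S}_i(\{o_i\}\mid z_i)\overline{Q}_i(\{z_i\}\mid z_{i-1})$ for $k\in\{1,\dots,n\}$; $\alpha^{\max}_k(x_k):=\max\{\alpha_k(z_{k:n}):z_{k:n}\in\mathcal{X}_{k:n},z_k=x_k\}$. *)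

(* Defs.v *)
From HB Require Import structures.
From mathcomp Require Import all_boot all_order all_algebra.
From mathcomp Require Import boolp classical_sets reals.
Set Implicit Arguments. Unset Strict Implicit. Unset Printing Implicit Defensive.
Import Order.TTheory GRing.Theory Num.Theory.
Local Open Scope ring_scope.
Local Open Scope classical_set_scope.

Section IHMM.
Variable R : realType.

(* (lower) previsions on gambles on a space A *)
Definition LP (A : Type) := (A -> R) -> R.

Definition coherent (A : Type) (P : LP A) : Prop :=
  [/\ (forall (f : A -> R) (c : R), (forall a, c <= f a) -> c <= P f),
      (forall (l : R) (f : A -> R), 0 <= l -> P (fun a => l * f a) = l * P f)
    & (forall f g : A -> R, P f + P g <= P (fun a => f a + g a))].

Definition upper (A : Type) (P : LP A) (f : A -> R) : R := - P (fun a => - f a).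

Definition upr1 (A : eqType) (P : LP A) (a : A) : R :=
  upper P (fun b => (b == a)%:R).

(* Independent natural extension (epistemic independence) of P1 on A and
   P2 on B: the natural extension of the conditional assessments
   P1(.|b) := P1 and P2(.|a) := P2 (mutual epistemic irrelevance). *)
Definition INE (A B : Type) (P1 : LP A) (P2 : LP B) : LP (A * B) :=
  fun f => sup [set mu : R | exists h1 h2 : A * B -> R,
    forall a b,
      (h1 (a, b) - P1 (fun a' => h1 (a', b)))
      + (h2 (a, b) - P2 (fun b' => h2 (a, b'))) <= f (a, b) - mu].

Variables (X O : nat -> finType).
Variable Q : forall k, X k.-1 -> LP (X k).
Variable S : forall k, X k -> LP (O k).

(* T k m = X_k x O_k x X_{k+1} x O_{k+1} x ... (m positions k..k+m-1) *)
Fixpoint T (k m : nat) : Type :=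
  match m with 0 => unit | m'.+1 => (X k * (O k * T k.+1 m'))%type end.

Fixpoint XS (k m : nat) : finType :=
  match m with 0 => (unit : finType) | m'.+1 => ((X k * XS k.+1 m')%type : finType) end.
Fixpoint OS (k m : nat) : finType :=
  match m with 0 => (unit : finType) | m'.+1 => ((O k * OS k.+1 m')%type : finType) end.

(* E_k(.|x_k) on gambles on O_k x X_{k+1:k+m} x O_{k+1:k+m};
   m = 0 corresponds to k = n (E_n = S_n). *)
Fixpoint Ej (k m : nat) {struct m} : X k -> LP (O k * T k.+1 m) :=
  match m return X k -> LP (O k * T k.+1 m) with
  | 0 => fun x g => S x (fun o => g (o, tt))
  | m'.+1 => fun x =>
      INE (S x) (fun h => @Q k.+1 x (fun y => @Ej k.+1 m' y (fun p => h (y, p))))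
  end.

Definition Pj (k m : nat) (z : X k.-1) : LP (T k m.+1) :=
  fun f => Q z (fun xk => @Ej k m xk (fun p => f (xk, p))).

Fixpoint matchX (k m : nat) : XS k m -> T k m -> bool :=
  match m return XS k m -> T k m -> bool with
  | 0 => fun _ _ => true
  | m'.+1 => fun xs t => (xs.1 == t.1) && matchX xs.2 t.2.2
  end.
Fixpoint matchO (k m : nat) : OS k m -> T k m -> bool :=
  match m return OS k m -> T k m -> bool with
  | 0 => fun _ _ => true
  | m'.+1 => fun os t => (os.1 == t.2.1) && matchO os.2 t.2.2
  end.

Definition opt (s m : nat) (z : X s.-1) (os : OS s m.+1) (xh : XS s m.+1) : Prop :=
  forall x : XS s m.+1,
    @Pj s m z (fun t => (matchO os t)%:R * ((matchX x t)%:R - (matchX xh t)%:R)) <= 0.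

Fixpoint beta (s m : nat) : X s.-1 -> XS s m -> OS s m -> R :=
  match m return X s.-1 -> XS s m -> OS s m -> R with
  | 0 => fun _ _ _ => 1
  | m'.+1 => fun prev xs os =>
      upr1 (S xs.1) os.1 * upr1 (Q prev) xs.1 * @beta s.+1 m' xs.1 xs.2 os.2
  end.

(* alpha_{s-1}(xh ⊕ xs) for observations oh = o_{s-1}, os = o_{s:n} *)
Definition alpha (s m : nat) (xh : X s.-1) (oh : O s.-1) (xs : XS s m) (os : OS s m) : R :=
  upr1 (S xh) oh * @beta s m xh xs os.

Definition alphamax (s m : nat) (xh : X s.-1) (oh : O s.-1) (os : OS s m) : R :=
  \big[Num.max/0]_(xs : XS s m) alpha xh oh xs os.

End IHMM.

(* Main.v *)
Require Import Defs.
From HB Require Import structures.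
From mathcomp Require Import all_boot all_order all_algebra.
From mathcomp Require Import boolp classical_sets reals.
From mathcomp Require Import ring lra zify.
Set Implicit Arguments. Unset Strict Implicit. Unset Printing Implicit Defensive.
Import Order.TTheory GRing.Theory Num.Theory.
Local Open Scope ring_scope.
Local Open Scope classical_set_scope.

Definition rsup (R : realType) (F : R -> R) : R := sup [set x | exists t, F t = x].

Lemma rsup_ub (R : realType) (F : R -> R) k : (forall t, F t <= k) -> forall t, F t <= rsup F.
Proof.
move=> Hk t; apply: ub_le_sup; last by exists t.
by exists k => x [u <-].
Qed.

Lemma rsup_le (R : realType) (F : R -> R) k : (forall t, F t <= k) -> rsup F <= k.
Proof. by move=> Hk; apply: ge_sup; [exists (F 0), 0 | move=> x [u <-]]. Qed.

Definition sl (R : realType) (A : Type) (P : (A -> R) -> R) :=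
  (forall f g, P f + P g <= P (fun a => f a + g a)) /\
  (forall l f, 0 <= l -> P (fun a => l * f a) = l * P f).

Lemma sl0 (R : realType) (A : Type) (P : (A -> R) -> R) : sl P -> P (fun _ => 0) = 0.
Proof.
case=> _ H.
have -> : (fun _ : A => 0 : R) = (fun a => 0 * (fun _ => 0 : R) a) by apply: funext => a; rewrite mul0r.
by rewrite H // mul0r.
Qed.

Lemma slN (R : realType) (A : Type) (P : (A -> R) -> R) f : sl P -> P f + P (fun a => - f a) <= 0.
Proof.
move=> hP; have [H _] := hP; apply: le_trans (H _ _) _.
have -> : (fun a => f a + - f a) = (fun _ => 0) by apply: funext => a; rewrite subrr.
by rewrite sl0.
Qed.

Definition ldir (R : realType) (A : Type) (P : (A -> R) -> R) (e : A -> R) (c : R) :=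
  forall f t, P (fun a => f a + t * e a) = P f + t * c.

Definition ext (R : realType) (A : Type) (P : (A -> R) -> R) (e : A -> R) (c : R) f :=
  rsup (fun t => P (fun a => f a + t * e a) - t * c).


Lemma ext_bnd (R : realType) (A : Type) (P : (A -> R) -> R) e c :
  sl P -> P e <= c -> c <= - P (fun a => - e a) ->
  forall f t, P (fun a => f a + t * e a) - t * c <= - P (fun a => - f a).
Proof.
move=> hP h1 h2 f t; have [Had Hh] := hP.
have Hte : P (fun a => t * e a) <= t * c.
  have [t0|t0] := leP 0 t; first by rewrite Hh //; apply: ler_wpM2l.
  have -> : (fun a => t * e a) = (fun a => (- t) * (- e a)).
    by apply: funext => a; rewrite mulrNN.
  rewrite Hh; last by rewrite oppr_ge0 ltW.
  rewrite -[t * c]mulrNN; apply: ler_wpM2l; first by rewrite oppr_ge0 ltW.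
  by rewrite lerNr.
have := Had (fun a => f a + t * e a) (fun a => - f a).
have -> : (fun a => f a + t * e a + - f a) = (fun a => t * e a).
  by apply: funext => a; rewrite addrC addKr.
move=> H.
lra.
Qed.

Lemma ext_ub (R : realType) (A : Type) (P : (A -> R) -> R) e c :
  sl P -> P e <= c -> c <= - P (fun a => - e a) ->
  forall f t, P (fun a => f a + t * e a) - t * c <= ext P e c f.
Proof. by move=> hP h1 h2 f; apply: rsup_ub; apply: ext_bnd. Qed.

Lemma ext_le (R : realType) (A : Type) (P : (A -> R) -> R) e c f k :
  (forall t, P (fun a => f a + t * e a) - t * c <= k) -> ext P e c f <= k.
Proof. exact: rsup_le. Qed.

Lemma ext_ge (R : realType) (A : Type) (P : (A -> R) -> R) e c :
  sl P -> P e <= c -> c <= - P (fun a => - e a) ->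
  forall f, P f <= ext P e c f.
Proof.
move=> hP h1 h2 f; have := ext_ub hP h1 h2 f 0.
have -> : (fun a => f a + 0 * e a) = f by apply: funext => a; rewrite mul0r addr0.
by rewrite mul0r subr0.
Qed.

Lemma ext_dir (R : realType) (A : Type) (P : (A -> R) -> R) e c :
  sl P -> P e <= c -> c <= - P (fun a => - e a) -> ldir (ext P e c) e c.
Proof.
move=> hP h1 h2 f s; apply/eqP; rewrite eq_le; apply/andP; split.
  apply: ext_le => t.
  have := ext_ub hP h1 h2 f (s + t).
  have -> : (fun a => f a + s * e a + t * e a) = (fun a => f a + (s + t) * e a).
    by apply: funext => a; rewrite mulrDl addrA.
  lra.
rewrite -lerBrDr; apply: ext_le => t.
have := ext_ub hP h1 h2 (fun a => f a + s * e a) (t - s).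
have -> : (fun a => f a + s * e a + (t - s) * e a) = (fun a => f a + t * e a).
  by apply: funext => a; ring.
lra.
Qed.

Lemma ext_pres (R : realType) (A : Type) (P : (A -> R) -> R) e c e' c' :
  sl P -> P e <= c -> c <= - P (fun a => - e a) -> ldir P e' c' -> ldir (ext P e c) e' c'.
Proof.
move=> hP h1 h2 hd f s; apply/eqP; rewrite eq_le; apply/andP; split.
  apply: ext_le => t.
  have := ext_ub hP h1 h2 f t.
  have := hd (fun a => f a + t * e a) s.
  have -> : (fun a => f a + t * e a + s * e' a) = (fun a => f a + s * e' a + t * e a).
    by apply: funext => a; rewrite addrAC.
  lra.
rewrite -lerBrDr; apply: ext_le => t.
have := ext_ub hP h1 h2 (fun a => f a + s * e' a) t.
have := hd (fun a => f a + t * e a) s.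
have -> : (fun a => f a + t * e a + s * e' a) = (fun a => f a + s * e' a + t * e a).
  by apply: funext => a; rewrite addrAC.
lra.
Qed.

Lemma ext_sl (R : realType) (A : Type) (P : (A -> R) -> R) e c :
  sl P -> P e <= c -> c <= - P (fun a => - e a) -> sl (ext P e c).
Proof.
move=> hP h1 h2; have [Had Hh] := hP; split.
  move=> f g; rewrite -lerBrDr; apply: ext_le => t.
  rewrite lerBrDr addrC -lerBrDr; apply: ext_le => u.
  have := ext_ub hP h1 h2 (fun a => f a + g a) (t + u).
  have := Had (fun a => f a + t * e a) (fun a => g a + u * e a).
  have -> : (fun a => f a + t * e a + (g a + u * e a)) = (fun a => f a + g a + (t + u) * e a).
    by apply: funext => a; rewrite mulrDl addrACA.
  lra.
move=> l f l0; have [->|lp] := eqVneq l 0.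
  rewrite mul0r; apply/eqP; rewrite eq_le; apply/andP; split.
    apply: ext_le => t.
    have := ext_bnd hP h1 h2 (fun a => 0 * f a) t.
    have -> : (fun a => - (0 * f a)) = (fun _ => 0) by apply: funext => a; rewrite mul0r oppr0.
    by rewrite sl0 // oppr0.
  have := ext_ge hP h1 h2 (fun a => 0 * f a).
  have -> : (fun a => 0 * f a) = (fun _ => 0) by apply: funext => a; rewrite mul0r.
  by rewrite sl0.
have lg : 0 < l by rewrite lt_neqAle eq_sym lp.
apply/eqP; rewrite eq_le; apply/andP; split.
  apply: ext_le => t.
  have := ext_ub hP h1 h2 f (t / l).
  have := Hh l (fun a => f a + t / l * e a) l0.
  have -> : (fun a => l * (f a + t / l * e a)) = (fun a => l * f a + t * e a).
    by apply: funext => a; field.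
  move=> ->.
  have -> : t * c = l * (t / l * c) by field.
  rewrite -mulrBr => H; rewrite ler_wpM2l //.
rewrite mulrC -ler_pdivlMr //; apply: ext_le => t.
rewrite ler_pdivlMr //.
have := ext_ub hP h1 h2 (fun a => l * f a) (l * t).
have := Hh l (fun a => f a + t * e a) l0.
have -> : (fun a => l * (f a + t * e a)) = (fun a => l * f a + l * t * e a).
  by apply: funext => a; rewrite mulrDr mulrA.
move=> ->; rewrite -mulrA -mulrBr mulrC; lra.
Qed.

Definition ind (A : eqType) (R : realType) (a : A) : A -> R := fun b => (b == a)%:R.

Lemma iter_ext (R : realType) (A : eqType) (s : seq A) (P : (A -> R) -> R) :
  sl P -> exists P', [/\ sl P', (forall f, P f <= P' f),
    (forall a, a \in s -> exists c, ldir P' (ind R a) c) &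
    (forall e c, ldir P e c -> ldir P' e c)].
Proof.
elim: s P => [|a s IH] P hP.
  by exists P; split.
have h1 : P (ind R a) <= P (ind R a) by [].
have h2 : P (ind R a) <= - P (fun b => - ind R a b) by have := slN (ind R a) hP; lra.
have [P' [sP' ge' dir' pres']] := IH _ (ext_sl hP h1 h2).
exists P'; split => //.
- by move=> f; apply: le_trans (ext_ge hP h1 h2 f) (ge' f).
- move=> b; rewrite inE => /orP [/eqP ->|bs]; last exact: dir'.
  by exists (P (ind R a)); apply: pres'; apply: ext_dir.
- by move=> e c hd; apply: pres'; apply: ext_pres.
Qed.

Lemma HB (R : realType) (A : finType) (P : (A -> R) -> R) (a0 : A) :
  coherent P -> exists p : A -> R,
    (forall f, P f <= \sum_a p a * f a) /\ p a0 = upr1 P a0.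
Proof.
case=> _ Hh Had.
have hP : sl P by split => // l f l0; apply: Hh.
set c0 := upr1 P a0.
have h1 : P (ind R a0) <= c0.
  by have := slN (ind R a0) hP; rewrite /c0 /upr1 /upper /ind; lra.
have h2 : c0 <= - P (fun b => - ind R a0 b) by [].
have [P' [sP' ge' dir' pres']] := iter_ext (enum A) (ext_sl hP h1 h2).
have d0 : ldir P' (ind R a0) c0 by apply: pres'; apply: ext_dir.
have P'0 := sl0 sP'.
have lin : forall a c, ldir P' (ind R a) c -> c = P' (ind R a).
  move=> a c /(_ (fun _ => 0) 1).
  have -> : (fun b : A => 0 + 1 * ind R a b) = ind R a by apply: funext => b; rewrite add0r mul1r.
  by rewrite P'0 add0r mul1r.
have dirs : forall a, ldir P' (ind R a) (P' (ind R a)).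
  by move=> a; have [c hc] := dir' a (mem_enum _ a); rewrite -(lin _ _ hc).
exists (fun a => P' (ind R a)); split; last by rewrite -(lin _ _ d0).
have key : forall (s : seq A) f, P' (fun b => \sum_(a <- s) f a * ind R a b) = \sum_(a <- s) P' (ind R a) * f a.
  elim => [|x s IHs] f.
    have -> : (fun b : A => \sum_(a <- [::]) f a * ind R a b) = (fun _ => 0) by apply: funext => b; rewrite big_nil.
    by rewrite P'0 big_nil.
  have -> : (fun b : A => \sum_(a <- x :: s) f a * ind R a b) = (fun b => \sum_(a <- s) f a * ind R a b + f x * ind R x b).
    by apply: funext => b; rewrite big_cons addrC.
  by rewrite dirs IHs big_cons addrC mulrC.
move=> f; apply: (le_trans (ext_ge hP h1 h2 f)); apply: (le_trans (ge' f)).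
have Ef : (fun b => \sum_(a <- enum A) f a * ind R a b) = f.
  apply: funext => b; rewrite big_enum /= (bigD1 b) //= /ind eqxx mulr1 big1 ?addr0 //.
  by move=> a /negbTE; rewrite eq_sym => ->; rewrite mulr0.
by rewrite -{1}Ef key big_enum.
Qed.

Definition Lin (R : realType) (B : Type) (L : (B -> R) -> R) :=
  [/\ (forall f g, L (fun b => f b + g b) = L f + L g),
      (forall l f, L (fun b => l * f b) = l * L f),
      (forall f g, (forall b, f b <= g b) -> L f <= L g) &
      L (fun _ => 1) = 1].

Lemma LinC (R : realType) (B : Type) (L : (B -> R) -> R) k : Lin L -> L (fun _ => k) = k.
Proof.
case=> _ Hh _ H1.
have -> : (fun _ : B => k) = (fun b => k * (fun _ => 1 : R) b) by apply: funext => b; rewrite mulr1.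
by rewrite Hh H1 mulr1.
Qed.

Lemma LinN (R : realType) (B : Type) (L : (B -> R) -> R) f : Lin L -> L (fun b => - f b) = - L f.
Proof.
case=> _ Hh _ _.
have -> : (fun b => - f b) = (fun b => (-1) * f b) by apply: funext => b; rewrite mulN1r.
by rewrite Hh mulN1r.
Qed.

Lemma LinB (R : realType) (B : Type) (L : (B -> R) -> R) f g : Lin L -> L (fun b => f b - g b) = L f - L g.
Proof. by move=> hL; have [HD _ _ _] := hL; rewrite (HD f (fun b => - g b)) LinN. Qed.

Lemma Lin_sum (R : realType) (B : Type) (A : Type) (L : (B -> R) -> R) (F : A -> B -> R) (s : seq A) :
  Lin L -> L (fun b => \sum_(a <- s) F a b) = \sum_(a <- s) L (F a).
Proof.
move=> hL; have [HD _ _ _] := hL; elim: s => [|x s IHs].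
  have -> : (fun b : B => \sum_(a <- [::]) F a b) = (fun _ => 0) by apply: funext => b; rewrite big_nil.
  by rewrite LinC // big_nil.
have -> : (fun b => \sum_(a <- x :: s) F a b) = (fun b => F x b + \sum_(a <- s) F a b).
  by apply: funext => b; rewrite big_cons.
by rewrite (HD (F x)) IHs big_cons.
Qed.

Definition pmf (R : realType) (A : finType) (r : A -> R) := (forall a, 0 <= r a) /\ \sum_a r a = 1.

Lemma Lin_mix (R : realType) (A : finType) (B : Type) (r : A -> R) (L2 : A -> (B -> R) -> R) :
  pmf r -> (forall a, Lin (L2 a)) -> Lin (fun h : A * B -> R => \sum_a r a * L2 a (fun b => h (a, b))).
Proof.
move=> [r0 r1] hL; split.
- move=> f g; rewrite -big_split /=; apply: eq_bigr => a _.
  by have [HD _ _ _] := hL a; rewrite (HD (fun b => f (a, b)) (fun b => g (a, b))) mulrDr.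
- move=> l f; rewrite mulr_sumr; apply: eq_bigr => a _.
  by have [_ Hh _ _] := hL a; rewrite (Hh l (fun b => f (a, b))) mulrCA.
- move=> f g fg; apply: ler_sum => a _; apply: ler_wpM2l => //.
  by have [_ _ Hm _] := hL a; apply: Hm => b; apply: fg.
- by rewrite -[RHS]r1; apply: eq_bigr => a _; rewrite LinC // mulr1.
Qed.

Lemma coh_mono (R : realType) (A : Type) (P : (A -> R) -> R) f g :
  coherent P -> (forall a, f a <= g a) -> P f <= P g.
Proof.
case=> Hm _ Had fg.
have := Had f (fun a => g a - f a).
have -> : (fun a => f a + (g a - f a)) = g by apply: funext => a; rewrite addrC subrK.
have : 0 <= P (fun a => g a - f a) by apply: Hm => a; rewrite subr_ge0.
lra.
Qed.

Lemma HBpmf (R : realType) (A : finType) (P : (A -> R) -> R) (a0 : A) :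
  coherent P -> exists r : A -> R,
    [/\ pmf r, (forall f, P f <= \sum_a r a * f a), r a0 = upr1 P a0 &
        forall a, r a <= upr1 P a].
Proof.
move=> hP; have [r [dom ra0]] := HB a0 hP; exists r.
have hP' := hP; case: hP' => Hm Hh Had.
have rind : forall b, \sum_a r a * ind R b a = r b.
  move=> b; rewrite (bigD1 b) //= /ind eqxx mulr1 big1 ?addr0 //.
  by move=> a /negbTE ->; rewrite mulr0.
split => //.
- split.
    move=> b; rewrite -rind; apply: le_trans (dom _); apply: Hm => a.
    by rewrite /ind ler0n.
  apply/eqP; rewrite eq_le; apply/andP; split.
    have := dom (fun _ => -1).
    rewrite (eq_bigr (fun a => - r a)); last by move=> a _; rewrite mulrN1.
    rewrite sumrN.
    have : -1 <= P (fun _ : A => -1) by apply: Hm.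
    lra.
  have := dom (fun _ => 1).
  rewrite (eq_bigr r); last by move=> a _; rewrite mulr1.
  have : 1 <= P (fun _ : A => 1) by apply: Hm.
  lra.
- move=> b; rewrite /upr1 /upper lerNr -rind.
  apply: le_trans (dom _) _; rewrite -sumrN; apply: ler_sum => a _.
  by rewrite mulrN.
Qed.

Lemma INE_dom (R : realType) (A : finType) (B : Type) (P1 : LP R A) (P2 : LP R B)
  (r : A -> R) (L2 : (B -> R) -> R) :
  pmf r -> (forall f, P1 f <= \sum_a r a * f a) -> Lin L2 -> (forall h, P2 h <= L2 h) ->
  forall f, INE P1 P2 f <= \sum_a r a * L2 (fun b => f (a, b)).
Proof.
move=> [r0 r1] d1 hL d2 f; have [HD Hh Hm _] := hL.
apply: ge_sup.
  exists (P1 (fun a => P2 (fun b => f (a, b)))).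
  exists (fun ab => P2 (fun b => f (ab.1, b))), f => a b /=.
  lra.
move=> mu [h1 [h2 H]].
pose ph b := P1 (fun a' => h1 (a', b)).
pose LM := fun h : A * B -> R => \sum_a r a * L2 (fun b => h (a, b)).
have hLM : Lin LM by apply: (@Lin_mix R A B r (fun _ => L2)) => //; split.
have [HDM _ HmM _] := hLM.
have E1 := HmM (fun ab => (h1 ab - ph ab.2) + (h2 ab - P2 (fun b' => h2 (ab.1, b')))) (fun ab => f ab - mu)
   (fun ab => let: (a, b) := ab in H a b).
rewrite (HDM (fun ab => h1 ab - ph ab.2)) (LinB _ _ hLM) (LinB _ _ hLM) (LinB _ _ hLM) (LinC _ hLM) in E1.
have E5 : 0 <= LM h2 - LM (fun ab => P2 (fun b' => h2 (ab.1, b'))).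
  rewrite -(LinB _ _ hLM); apply: sumr_ge0 => a _; apply: mulr_ge0 => //.
  by rewrite /= (LinB _ _ hL) LinC // subr_ge0 d2.
have E6 : LM (fun ab => ph ab.2) <= LM h1.
  have -> : LM (fun ab => ph ab.2) = L2 ph.
    by rewrite /LM /= -mulr_suml r1 mul1r.
  have := Lin_sum (fun a b => r a * h1 (a, b)) (index_enum A) hL.
  rewrite (eq_bigr (fun a => r a * L2 (fun b => h1 (a, b)))); last by move=> a _; rewrite Hh.
  move=> E; apply: (le_trans (_ : _ <= L2 (fun b => \sum_(a <- index_enum A) r a * h1 (a, b)))).
    by apply: Hm => b; exact: d1.
  by rewrite E.
rewrite /LM /= in E1 E5 E6 *.
lra.
Qed.

Definition gE (R : realType) (X O : nat -> finType) (k m : nat) (os : OS O k m.+1) (xs : XS X k.+1 m)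
  (p : O k * T X O k.+1 m) : R := ((os.1 == p.1) && matchO os.2 p.2 && matchX xs p.2)%:R.
Arguments gE {R X O k m} os xs p.

Lemma mix_pick (R : realType) (A : finType) (B : Type) (w : A -> R) (L2 : A -> (B -> R) -> R)
  (a0 : A) (F : A -> B -> R) (G : B -> R) :
  (forall a, Lin (L2 a)) -> (forall a b, F a b = (a0 == a)%:R * G b) ->
  \sum_a w a * L2 a (F a) = w a0 * L2 a0 G.
Proof.
move=> hL hF.
have E : forall a, L2 a (F a) = (a0 == a)%:R * L2 a G.
  move=> a; have [_ Hh _ _] := hL a.
  by rewrite -Hh; congr (L2 a); apply: funext => b; rewrite hF.
rewrite (bigD1 a0) //= E eqxx mul1r big1 ?addr0 // => a /negbTE.
by rewrite eq_sym E => ->; rewrite mul0r mulr0.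
Qed.

Lemma Lin_ge0 (R : realType) (B : Type) (L : (B -> R) -> R) f : Lin L -> (forall b, 0 <= f b) -> 0 <= L f.
Proof. by move=> hL f0; have [_ _ Hm _] := hL; rewrite -(LinC 0 hL); apply: Hm. Qed.

Lemma Dom (R : realType) (n : nat) (X O : nat -> finType)
  (Q : forall k, X k.-1 -> LP R (X k)) (S : forall k, X k -> LP R (O k)) :
  (forall k (z : X k.-1), (1 <= k <= n)%N -> coherent (Q k z)) ->
  (forall k (x : X k), (1 <= k <= n)%N -> coherent (S k x)) ->
  forall m k, (1 <= k)%N -> (k + m <= n)%N ->
  forall (os : OS O k m.+1) (xs : XS X k.+1 m) (y : X k),
  exists L : LP R (O k * T X O k.+1 m),
    [/\ Lin L, (forall f, @Ej R X O Q S k m y f <= L f),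
        upr1 (S k y) os.1 * @beta R X O Q S k.+1 m y xs os.2 <= L (gE os xs) &
        forall x, L (gE os x) <= upr1 (S k y) os.1 * @beta R X O Q S k.+1 m y x os.2].
Proof.
move=> HQ HS; elim=> [|m IH] k k1 kn os xs y.
  have [r [pr dr rx ru]] := HBpmf os.1 (HS k y (ltac:(lia))).
  pose L2 := fun (_ : O k) (g : T X O k.+1 0 -> R) => g tt.
  have hL2 : forall o, Lin (L2 o).
    by move=> o; split => //= f g fg; apply: fg.
  exists (fun h => \sum_o r o * L2 o (fun b => h (o, b))); split.
  - exact: Lin_mix.
  - by move=> f; apply: dr.
  - have -> : \sum_o r o * L2 o (fun b => gE os xs (o, b)) = r os.1 * L2 os.1 (fun _ => 1).
      apply: mix_pick => // o b; rewrite /gE /= !andbT mulr1 //.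
    by rewrite /= rx.
  - move=> x.
    have -> : \sum_o r o * L2 o (fun b => gE os x (o, b)) = r os.1 * L2 os.1 (fun _ => 1).
      apply: mix_pick => // o b; rewrite /gE /= !andbT mulr1 //.
    by rewrite /= mulr1 mulr1 ru.
have [Lf hLf] := choice (fun y' : X k.+1 => IH k.+1 (ltac:(lia)) (ltac:(lia)) os.2 xs.2 y').
have [q [pq dq qx qu]] := HBpmf xs.1 (HQ k.+1 y (ltac:(lia))).
have [r [pr dr rx ru]] := HBpmf os.1 (HS k y (ltac:(lia))).
have hLf1 : forall y', Lin (Lf y') by move=> y'; case: (hLf y').
pose L2 := fun h : T X O k.+1 m.+1 -> R => \sum_y' q y' * Lf y' (fun p => h (y', p)).
have hL2 : Lin L2 by apply: Lin_mix.
have hL2' : forall o : O k, Lin ((fun _ => L2) o) by [].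
have dom2 : forall h, Q k.+1 y (fun y' => @Ej R X O Q S k.+1 m y' (fun p => h (y', p))) <= L2 h.
  move=> h; apply: (le_trans (_ : _ <= Q k.+1 y (fun y' => Lf y' (fun p => h (y', p))))); last exact: dq.
  apply: coh_mono; first by apply: HQ; lia.
  by move=> y'; case: (hLf y') => _ d _ _; apply: d.
have split1 : forall (x : XS X k.+1 m.+1) o t, (gE os x (o, t) : R) = (os.1 == o)%:R * ((x.1 == t.1)%:R * gE os.2 x.2 t.2).
  move=> x o t; destruct t as [y' p]; rewrite /gE /=.
  case: (os.1 == o); case: (x.1 == y'); rewrite /= ?andbF ?mul0r ?mul1r ?mulr0 //.
have val : forall x : XS X k.+1 m.+1, \sum_o r o * (fun _ => L2) o (fun t => gE os x (o, t)) = r os.1 * (q x.1 * Lf x.1 (gE os.2 x.2)).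
  move=> x.
  rewrite (@mix_pick R (O k) _ r (fun _ => L2) os.1 (fun o t => gE os x (o, t)) (fun t => (x.1 == t.1)%:R * gE os.2 x.2 t.2)) //.
  congr (_ * _); rewrite /L2.
  exact: (@mix_pick R (X k.+1) _ q Lf x.1 (fun y' p => (x.1 == (y', p).1)%:R * gE os.2 x.2 (y', p).2) (gE os.2 x.2) hLf1 (fun _ _ => erefl)).
exists (fun h => \sum_o r o * (fun _ => L2) o (fun t => h (o, t))); split.
- exact: (@Lin_mix R (O k) _ r (fun _ => L2) pr hL2').
- by move=> f; apply: INE_dom.
- rewrite val rx qx.
  case: (hLf xs.1) => _ _ lb _.
  rewrite /=.
  have -> : upr1 (S k.+1 xs.1) os.2.1 * upr1 (Q k.+1 y) xs.1 * @beta R X O Q S k.+2 m xs.1 xs.2 os.2.2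
     = upr1 (Q k.+1 y) xs.1 * (upr1 (S k.+1 xs.1) os.2.1 * @beta R X O Q S k.+2 m xs.1 xs.2 os.2.2) by ring.
  apply: ler_wpM2l; first by rewrite -rx; case: pr.
  apply: ler_wpM2l; first by rewrite -qx; case: pq.
  exact: lb.
- move=> x; rewrite val /=.
  case: (hLf x.1) => _ _ _ ub.
  have -> : upr1 (S k.+1 x.1) os.2.1 * upr1 (Q k.+1 y) x.1 * @beta R X O Q S k.+2 m x.1 x.2 os.2.2
     = upr1 (Q k.+1 y) x.1 * (upr1 (S k.+1 x.1) os.2.1 * @beta R X O Q S k.+2 m x.1 x.2 os.2.2) by ring.
  apply: ler_pM => //; first by case: pr.
    apply: mulr_ge0; first by case: pq.
    by apply: Lin_ge0 => // p; rewrite /gE ler0n.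
  apply: ler_pM => //; first by case: pq.
  by apply: Lin_ge0 => // p; rewrite /gE ler0n.
Qed.

Lemma bigmax_ge (R : realType) (A : finType) (F : A -> R) (x : A) : F x <= \big[Num.max/0]_(a : A) F a.
Proof. by rewrite (bigD1 x) //= le_max lexx. Qed.

Unset Implicit Arguments.
Local Close Scope classical_set_scope.

Theorem lemma5 (R : realType) (n : nat) (X O : nat -> finType)
  (Q : forall k, X k.-1 -> LP R (X k)) (S : forall k, X k -> LP R (O k)) :
  (0 < n)%N ->
  #|X 0%N| = 1%N ->
  (forall k, (1 <= k <= n)%N -> (0 < #|X k|)%N /\ (0 < #|O k|)%N) ->
  (forall k (z : X k.-1), (1 <= k <= n)%N -> coherent (Q k z)) ->
  (forall k (x : X k), (1 <= k <= n)%N -> coherent (S k x)) ->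
  (forall k (z : X k.-1) (x : X k), (1 <= k <= n)%N -> 0 < upr1 (Q k z) x) ->
  (forall k (x : X k) (o : O k), (1 <= k <= n)%N -> 0 < upr1 (S k x) o) ->
  forall (s : nat), (2 <= s <= n)%N ->
  forall (oh : O s.-1) (os : OS O s (n - s).+1)
         (xh : X s.-1) (xs : XS X s (n - s).+1),
    alpha Q S xh oh xs os = alphamax Q S xh oh os ->
    opt Q S xh os xs.
Proof.
move=> n0 X0 Hcard HQ HS HQp HSp s s2n oh os xh xs Ha x.
have [Lf hLf] := choice (fun y : X s => Dom HQ HS (ltac:(lia) : (1 <= s)%N) (ltac:(lia) : (s + (n - s) <= n)%N) os xs.2 y).
have [q [pq dq qx qu]] := HBpmf xs.1 (HQ s xh (ltac:(lia))).
have hLf1 : forall y, Lin (Lf y) by move=> y; case: (hLf y).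
pose LT := fun h : T X O s (n - s).+1 -> R => \sum_y q y * Lf y (fun p => h (y, p)).
have hLT : Lin LT by apply: Lin_mix.
have domT : forall h, @Pj R X O Q S s (n - s) xh h <= LT h.
  move=> h; apply: (le_trans (_ : _ <= Q s xh (fun y => Lf y (fun p => h (y, p))))); last exact: dq.
  rewrite /Pj; apply: coh_mono; first by apply: HQ; lia.
  by move=> y; case: (hLf y) => _ d _ _; apply: d.
pose g (z : XS X s (n - s).+1) := fun t : T X O s (n - s).+1 => ((matchO os t)%:R * (matchX z t)%:R : R).
have gv : forall z, LT (g z) = q z.1 * Lf z.1 (gE os z.2).
  move=> z; apply: (@mix_pick R (X s) _ q Lf z.1 (fun y p => g z (y, p)) (gE os z.2) hLf1).
  move=> y p; rewrite /g /gE /=; case: (z.1 == y); rewrite /= ?mulr0 ?mul0r ?mul1r //.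
  by rewrite -natrM mulnb.
apply: le_trans (domT _) _.
have -> : (fun t => (matchO os t)%:R * ((matchX x t)%:R - (matchX xs t)%:R)) = (fun t => g x t - g xs t :> R).
  by apply: funext => t; rewrite /g mulrBr.
rewrite (LinB _ _ hLT) !gv.
have U0 : 0 < upr1 (S s.-1 xh) oh by apply: HSp; lia.
have Hb : @beta R X O Q S s (n - s).+1 xh x os <= @beta R X O Q S s (n - s).+1 xh xs os.
  rewrite -(ler_pM2l U0); have := bigmax_ge (fun z => alpha Q S xh oh z os) x.
  by rewrite -/(alphamax Q S xh oh os) -Ha.
move: Hb; rewrite /=.
case: (hLf x.1) => _ _ _ ub; case: (hLf xs.1) => _ _ lb _.
have h1 : q x.1 * Lf x.1 (gE os x.2) <= upr1 (Q s xh) x.1 * (upr1 (S s x.1) os.1 * @beta R X O Q S s.+1 (n - s) x.1 x.2 os.2).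
  apply: ler_pM => //; first by case: pq.
  by apply: Lin_ge0 => // p; rewrite /gE ler0n.
have h2 : upr1 (Q s xh) xs.1 * (upr1 (S s xs.1) os.1 * @beta R X O Q S s.+1 (n - s) xs.1 xs.2 os.2) <= q xs.1 * Lf xs.1 (gE os xs.2).
  by rewrite -qx; apply: ler_wpM2l => //; case: pq.
move: h1 h2; set a1 := upr1 (Q s xh) x.1; set a2 := upr1 (S s x.1) os.1; set a3 := @beta R X O Q S s.+1 (n - s) x.1 x.2 os.2.
set b1 := upr1 (Q s xh) xs.1; set b2 := upr1 (S s xs.1) os.1; set b3 := @beta R X O Q S s.+1 (n - s) xs.1 xs.2 os.2.
have -> : a2 * a1 * a3 = a1 * (a2 * a3) by ring.
have -> : b2 * b1 * b3 = b1 * (b2 * b3) by ring.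
lra.
Qed.
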